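(* Assume the bipartite graph $\mathcal{T}$ is a tree of diameter $3$. There is a constant $m_5$ with the following property. Fix $T>0$ and let measurable locally bounded $(\psi,y,z,w)$ on $[0,T]$ satisfy $$\text{(S1)}\ \sum_{j\in\mathcal{J}}(\psi_{ij}+\mu_{ij}\mathfrak{J}\psi_{ij})=w_i-y_i-\theta_i\mathfrak{J}y_i,\ i\in\mathcal{I};\quad \text{(S2)}\ \sum_{i\in\mathcal{I}}\psi_{ij}=-z_j,\ j\in\mathcal{J};\quad \text{(S3)}\ y_i,z_j\ge0;\quad \text{(S4)}\ \min(e\cdot y,e\cdot z)=0$$ on $[0,T]$ (with $\psi_{ij}=0$ for $i\not\sim j$). Let bounded measurable functions $f_i\ge0$, $i\in\mathcal{I}$, be given. Then there exist $(\hat\psi,\hat y,\hat z,\hat w)$ defined on $[0,T]$ satisfying (S1)–(S4) on $[0,T]$, such that $e\cdot\hat y\ge e\cdot y$, $e\cdot\hat z\le e\cdot z$, and $\hat w_i=w_i+f_i+\eta_i$ for $i\in\mathcal{I}$, where each $\eta_i$ is nondecreasing and continuous with $0\le\eta_i\le m_5T\sum_{i'\in\mathcal{I}}|f_{i'}|_T^*$ on $[0,T]$. The constant $m_5$ does not depend on $T$, $f_i$, $\psi,y,z,w$.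
   Context: $\mathcal{I}=\{1,\dots,I\}$, $\mathcal{J}=\{I+1,\dots,I+J\}$, $\mathcal{E}\subset\mathcal{I}\times\mathcal{J}$, $i\sim j$ iff $(i,j)\in\mathcal{E}$; $\mathcal{T}$ is the bipartite graph with vertices $\mathcal{I}\cup\mathcal{J}$ and edges $\mathcal{E}$. Constants $\mu_{ij}>0$ for $(i,j)\in\mathcal{E}$, $\mu_{ij}=0$ otherwise, $\theta_i\ge0$. $\mathfrak{J}f(t)=\int_0^tf(s)ds$, $|f|_T^*=\sup_{0\le s\le T}|f(s)|$, $e=(1,\dots,1)'$. *)

(* Defs.v *)
From HB Require Import structures.
From mathcomp Require Import all_boot all_order all_algebra.
From mathcomp Require Import all_classical all_reals all_analysis.
Set Implicit Arguments. Unset Strict Implicit. Unset Printing Implicit Defensive.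
Import Order.TTheory GRing.Theory Num.Theory.
Import numFieldNormedType.Exports.
Local Open Scope classical_set_scope.
Local Open Scope ring_scope.

Definition vert (nI nJ : nat) : finType := ('I_nI + 'I_nJ)%type.

Definition adj (nI nJ : nat) (E : {set 'I_nI * 'I_nJ}) : rel (vert nI nJ) :=
  fun u v => match u, v with
             | inl i, inr j => (i, j) \in E
             | inr j, inl i => (i, j) \in E
             | _, _ => false
             end.

Definition connected_graph (nI nJ : nat) (E : {set 'I_nI * 'I_nJ}) : Prop :=
  forall u v : vert nI nJ, connect (adj E) u v.

Definition acyclic_graph (nI nJ : nat) (E : {set 'I_nI * 'I_nJ}) : Prop :=
  forall c : seq (vert nI nJ), uniq c -> (3 <= size c)%N -> ~~ cycle (adj E) c.

Definition is_tree (nI nJ : nat) (E : {set 'I_nI * 'I_nJ}) : Prop :=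
  connected_graph E /\ acyclic_graph E.

Definition dist_le (nI nJ : nat) (E : {set 'I_nI * 'I_nJ}) (u v : vert nI nJ) (k : nat) : Prop :=
  exists p : seq (vert nI nJ), [/\ path (adj E) u p, last u p = v & (size p <= k)%N].

Definition diameter_eq (nI nJ : nat) (E : {set 'I_nI * 'I_nJ}) (k : nat) : Prop :=
  (forall u v : vert nI nJ, dist_le E u v k) /\
  (exists u v : vert nI nJ, forall k', (k' < k)%N -> ~ dist_le E u v k').

Definition Jint {R : realType} (f : R -> R) (t : R) : R :=
  (\int[@lebesgue_measure R]_(s in `[0, t]) f s)%R.

Definition supnormT {R : realType} (T : R) (f : R -> R) : R :=
  sup [set `|f s| | s in `[0, T]].

Definition regular_on {R : realType} (T : R) (f : R -> R) : Prop :=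
  measurable_fun `[0, T] f /\ exists M : R, forall t, t \in `[0, T] -> `|f t| <= M.

Definition system_S {R : realType} (nI nJ : nat) (E : {set 'I_nI * 'I_nJ})
  (mu : 'I_nI -> 'I_nJ -> R) (theta : 'I_nI -> R) (T : R)
  (psi : 'I_nI -> 'I_nJ -> R -> R) (y : 'I_nI -> R -> R) (z : 'I_nJ -> R -> R)
  (w : 'I_nI -> R -> R) : Prop :=
  forall t, t \in `[0, T] ->
    [/\ (forall i j, (i, j) \notin E -> psi i j t = 0),
        (forall i, \sum_(j < nJ) (psi i j t + mu i j * Jint (psi i j) t)
                   = w i t - y i t - theta i * Jint (y i) t),
        (forall j, \sum_(i < nI) psi i j t = - z j t),
        (forall i, 0 <= y i t) /\ (forall j, 0 <= z j t)
      & Num.min (\sum_(i < nI) y i t) (\sum_(j < nJ) z j t) = 0].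

(* Main.v *)
Require Import Defs.
From HB Require Import structures.
From mathcomp Require Import all_boot all_order all_algebra.
From mathcomp Require Import all_classical all_reals all_analysis.
Set Implicit Arguments. Unset Strict Implicit. Unset Printing Implicit Defensive.
Import Order.TTheory GRing.Theory Num.Theory.
Import numFieldNormedType.Exports.
Local Open Scope classical_set_scope.
Local Open Scope ring_scope.
From mathcomp Require Import ring lra measurable_realfun.
Section Graph.
Variables (nI nJ : nat) (E : {set 'I_nI * 'I_nJ}).

Lemma commonI (i i' : 'I_nI) : (forall u v : vert nI nJ, dist_le E u v 3) ->
  i != i' -> exists j, (i, j) \in E /\ (i', j) \in E.
Proof.
move=> /(_ (inl i) (inl i')) [p [Hp Hl Hs]] ii'.
case: p Hp Hl Hs => [|x [|y [|z [|? ?]]]].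
- by move=> _ [] /eqP; rewrite (negbTE ii').
- by case: x => [x|x] /=; rewrite ?andbT // => _ [].
- case: x => [x|x]; case: y => [y|y] //=; rewrite ?andbF //.
  by move=> /and3P[h1 h2 _] [] <- _; exists x.
- by case: x => [x|x]; case: y => [y|y]; case: z => [z|z] //=; rewrite ?andbF.
- by [].
Qed.

Lemma commonJ (j j' : 'I_nJ) : (forall u v : vert nI nJ, dist_le E u v 3) ->
  j != j' -> exists i, (i, j) \in E /\ (i, j') \in E.
Proof.
move=> /(_ (inr j) (inr j')) [p [Hp Hl Hs]] jj'.
case: p Hp Hl Hs => [|x [|y [|z [|? ?]]]].
- by move=> _ [] /eqP; rewrite (negbTE jj').
- by case: x => [x|x] /=; rewrite ?andbT // => _ [].
- case: x => [x|x]; case: y => [y|y] //=; rewrite ?andbF //.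
  by move=> /and3P[h1 h2 _] [] <- _; exists x.
- by case: x => [x|x]; case: y => [y|y]; case: z => [z|z] //=; rewrite ?andbF.
- by [].
Qed.

Lemma nbrI (i : 'I_nI) (j : 'I_nJ) : (forall u v : vert nI nJ, dist_le E u v 3) ->
  exists j', (i, j') \in E.
Proof.
move=> /(_ (inl i) (inr j)) [p [Hp Hl Hs]].
case: p Hp Hl Hs => [|x p] //=; case: x => [x|x] //= /andP[h _] _ _.
by exists x.
Qed.

Lemma nbrJ (i : 'I_nI) (j : 'I_nJ) : (forall u v : vert nI nJ, dist_le E u v 3) ->
  exists i', (i', j) \in E.
Proof.
move=> /(_ (inr j) (inl i)) [p [Hp Hl Hs]].
case: p Hp Hl Hs => [|x p] //=; case: x => [x|x] //= /andP[h _] _ _.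
by exists x.
Qed.

Lemma eq_inl (a b : 'I_nI) : (inl a == inl b :> vert nI nJ) = (a == b).
Proof. by apply/eqP/eqP => [[]|->]. Qed.
Lemma eq_inr (a b : 'I_nJ) : (inr a == inr b :> vert nI nJ) = (a == b).
Proof. by apply/eqP/eqP => [[]|->]. Qed.
Lemma eq_lr (a : 'I_nI) (b : 'I_nJ) : (inl a == inr b :> vert nI nJ) = false.
Proof. by apply/eqP. Qed.
Lemma eq_rl (a : 'I_nI) (b : 'I_nJ) : (inr b == inl a :> vert nI nJ) = false.
Proof. by apply/eqP. Qed.

Lemma no4 (i i' : 'I_nI) (j j' : 'I_nJ) : acyclic_graph E ->
  i != i' -> j != j' -> (i, j) \in E -> (i', j) \in E -> (i, j') \in E ->
  (i', j') \in E -> False.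
Proof.
move=> ac ii' jj' h1 h2 h3 h4.
have := ac [:: inl i; inr j; inl i'; inr j'].
rewrite /= !inE /= ?eq_inl ?eq_inr ?eq_lr ?eq_rl (negbTE ii') (negbTE jj') /= h1 h2 h3 h4.
by move=> /(_ isT isT).
Qed.

Lemma no6 (i1 i2 i3 : 'I_nI) (j1 j2 j3 : 'I_nJ) : acyclic_graph E ->
  i1 != i2 -> i2 != i3 -> i1 != i3 -> j1 != j2 -> j2 != j3 -> j1 != j3 ->
  (i1, j1) \in E -> (i2, j1) \in E -> (i2, j2) \in E -> (i3, j2) \in E ->
  (i3, j3) \in E -> (i1, j3) \in E -> False.
Proof.
move=> ac a b c d e f h1 h2 h3 h4 h5 h6.
have := ac [:: inl i1; inr j1; inl i2; inr j2; inl i3; inr j3].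
rewrite /= !inE /= ?eq_inl ?eq_inr ?eq_lr ?eq_rl (negbTE a) (negbTE b) (negbTE c) (negbTE d) (negbTE e) (negbTE f).
by rewrite /= h1 h2 h3 h4 h5 h6 => /(_ isT isT).
Qed.


Lemma sides : diameter_eq E 3 -> exists (i : 'I_nI) (j : 'I_nJ), True.
Proof.
move=> [D3 [u [v nd]]].
have [p [Hp Hl Hs]] := D3 u v.
case: p Hp Hl Hs => [|x p] /=.
  by move=> _ Hl _; exfalso; apply: (nd 0%N) => //; exists [::]; split.
clear nd; case: u => [u|u]; case: x => [x|x] //= _ _ _; try by [exists u, x | exists x, u].
Qed.

Lemma starJ (i1 : 'I_nI) (j1 : 'I_nJ) : is_tree E -> diameter_eq E 3 ->
  exists j0, forall i, (i, j0) \in E.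
Proof.
move=> [_ ac] [D3 _].
case: (pselect (exists i2, i2 != i1)) => [[i2 ne]|no].
  have [j0 [h1 h2]] := commonI D3 (ne : i2 != i1).
  exists j0 => i.
  case: (eqVneq i i2) => [->//|n2]; case: (eqVneq i i1) => [->//|n1].
  have [j13 [a1 a3]] := commonI D3 n1.
  have [j23 [b2 b3]] := commonI D3 n2.
  case: (eqVneq j13 j0) => [<-//|d1]; case: (eqVneq j23 j0) => [<-//|d2].
  case: (eqVneq j13 j23) => [e|d3].
    subst j23; exfalso; apply: (no4 (i:=i2) (i':=i1) (j:=j0) (j':=j13) ac) => //.
    by rewrite eq_sym.
  exfalso; apply: (no6 (i1:=i2) (i2:=i1) (i3:=i) (j1:=j0) (j2:=j13) (j3:=j23) ac) => //.
  all: try by rewrite eq_sym.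

have [j0 h] := nbrI i1 j1 D3.
exists j0 => i; case: (eqVneq i i1) => [->//|n].
by exfalso; apply: no; exists i.
Qed.

Lemma starI (i1 : 'I_nI) (j1 : 'I_nJ) : is_tree E -> diameter_eq E 3 ->
  exists i0, forall j, (i0, j) \in E.
Proof.
move=> [_ ac] [D3 _].
case: (pselect (exists j2, j2 != j1)) => [[j2 ne]|no].
  have [i0 [h1 h2]] := commonJ D3 (ne : j2 != j1).
  exists i0 => j.
  case: (eqVneq j j2) => [->//|n2]; case: (eqVneq j j1) => [->//|n1].
  have [i13 [a1 a3]] := commonJ D3 n1.
  have [i23 [b2 b3]] := commonJ D3 n2.
  case: (eqVneq i13 i0) => [<-//|d1]; case: (eqVneq i23 i0) => [<-//|d2].
  case: (eqVneq i13 i23) => [e|d3].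
    subst i23; exfalso; apply: (no4 (i:=i0) (i':=i13) (j:=j2) (j':=j1) ac) => //.
    by rewrite eq_sym.
  exfalso; apply: (no6 (i1:=i0) (i2:=i23) (i3:=i13) (j1:=j2) (j2:=j) (j3:=j1) ac) => //.
  all: try by rewrite eq_sym.

have [i0 h] := nbrJ i1 j1 D3.
exists i0 => j; case: (eqVneq j j1) => [->//|n].
by exfalso; apply: no; exists j.
Qed.

End Graph.


Section Anal.
Context {R : realType}.
Notation mu := (@lebesgue_measure R).
Implicit Types (T t s : R) (h : R -> R).

Lemma itv_sub T t : t \in `[0, T] -> `[0, t] `<=` `[0, T].
Proof.
rewrite in_itv /= => /andP[t0 tT] x /=; rewrite !in_itv /= => /andP[x0 xt].
by rewrite x0 (le_trans xt tT).
Qed.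

Lemma reg_int T h t : regular_on T h -> t \in `[0, T] ->
  mu.-integrable `[0, t] (EFin \o h).
Proof.
move=> [mh [M hM]] tT; apply: measurable_bounded_integrable => //.
- by rewrite /= lebesgue_measure_itv; case: ifP => _; rewrite ?ltry.
- exact: (measurable_funS _ (itv_sub tT) mh).
- exists M; split; first exact: num_real.
  move=> N MN x /= xt; rewrite (le_trans _ (ltW MN))// hM//.
  by have := itv_sub tT xt.
Qed.

Lemma Jint0 h : Jint h 0 = 0.
Proof. by rewrite /Jint set_itv1 Rintegral_set1. Qed.

Lemma in0T T t : 0 <= t -> t <= T -> t \in `[0, T].
Proof. by move=> a b; rewrite in_itv /= a b. Qed.

Lemma Jint_ext h1 h2 T t : t \in `[0, T] ->
  (forall u, u \in `[0, T] -> h1 u = h2 u) -> Jint h1 t = Jint h2 t.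
Proof.
move=> tT e; apply: eq_Rintegral => u; rewrite inE => ut; apply: e.
exact: (itv_sub tT).
Qed.

Lemma Jint_diff_cst h T s t : regular_on T h -> 0 <= s -> s <= t -> t <= T ->
  Jint h t - Jint h s = \int[mu]_(u in `]s, t]) h u.
Proof.
move=> rh s0 st tT; rewrite /Jint.
have := @Rintegral_itvB R h (BLeft 0) (BRight t) s.
rewrite /= => -> //.
  exact: (reg_int rh (in0T (le_trans s0 st) tT)).
all: by rewrite bnd_simp.
Qed.

Lemma meas_oc s t : t - s = fine (mu `]s, t]) \/ (t < s).
Proof.
case: (leP s t) => st; last by right.
left; rewrite /= lebesgue_measure_itv /= lte_fin.
case: (ltP s t) => st' //=.
have -> : t = s by apply/eqP; rewrite eq_le st st'.
by rewrite subrr.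
Qed.

Lemma oc_sub s t : 0 <= s -> `]s, t] `<=` `[0, t].
Proof.
move=> s0 x /=; rewrite !in_itv /= => /andP[sx xt].
by rewrite xt (le_trans s0 (ltW sx)).
Qed.

Lemma int_oc h T s t : regular_on T h -> 0 <= s -> s <= t -> t <= T ->
  mu.-integrable `]s, t] (EFin \o h).
Proof.
move=> rh s0 st tT.
have := reg_int rh (in0T (le_trans s0 st) tT).
apply: integrableS => //; exact: oc_sub.
Qed.

Lemma int_cst_oc s t (c : R) : mu.-integrable `]s, t] (EFin \o (fun=> c)).
Proof.
apply: measurable_bounded_integrable => //.
- by rewrite /= lebesgue_measure_itv; case: ifP => _; rewrite ?ltry.
- exists `|c|; split; first exact: num_real.
  by move=> N cN x _; rewrite ltW.
Qed.

Lemma Jint_diff_ge h T s t c : regular_on T h -> 0 <= s -> s <= t -> t <= T ->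
  (forall u, s < u -> u <= t -> c <= h u) -> c * (t - s) <= Jint h t - Jint h s.
Proof.
move=> rh s0 st tT hc; rewrite (Jint_diff_cst rh s0 st tT).
have [e|] := meas_oc s t; last by rewrite ltNge st.
rewrite e -Rintegral_cst //; apply: le_Rintegral => //.
- exact: int_cst_oc.
- exact: (int_oc rh).
- by move=> x /=; rewrite in_itv /= => /andP[sx xt]; apply: hc.
Qed.

Lemma Jint_diff_le h T s t c : regular_on T h -> 0 <= s -> s <= t -> t <= T ->
  (forall u, s < u -> u <= t -> h u <= c) -> Jint h t - Jint h s <= c * (t - s).
Proof.
move=> rh s0 st tT hc; rewrite (Jint_diff_cst rh s0 st tT).
have [e|] := meas_oc s t; last by rewrite ltNge st.
rewrite e -Rintegral_cst //; apply: le_Rintegral => //.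
- exact: (int_oc rh).
- exact: int_cst_oc.
- by move=> x /=; rewrite in_itv /= => /andP[sx xt]; apply: hc.
Qed.

Lemma Jint_cont h T : regular_on T h -> 0 <= T ->
  {within `[0, T], continuous (Jint h)}.
Proof.
move=> rh T0; apply: parameterized_integral_continuous => //.
exact: (reg_int rh (in0T T0 (lexx T))).
Qed.

Lemma JintD h1 h2 T t : regular_on T h1 -> regular_on T h2 -> t \in `[0, T] ->
  Jint (fun u => h1 u + h2 u) t = Jint h1 t + Jint h2 t.
Proof. by move=> r1 r2 tT; rewrite /Jint RintegralD //; apply: reg_int tT. Qed.

Lemma JintZ c h T t : regular_on T h -> t \in `[0, T] ->
  Jint (fun u => c * h u) t = c * Jint h t.
Proof. by move=> r tT; rewrite /Jint RintegralZl //; apply: reg_int tT. Qed.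

Lemma reg_ext T h1 h2 : (forall u, h1 u = h2 u) -> regular_on T h1 -> regular_on T h2.
Proof. by move=> e; have -> : h1 = h2 by apply/funext. Qed.

Lemma reg_cst T (c : R) : regular_on T (fun=> c).
Proof. by split => //; exists `|c|. Qed.

Lemma reg_add T h1 h2 : regular_on T h1 -> regular_on T h2 ->
  regular_on T (fun u => h1 u + h2 u).
Proof.
move=> [m1 [M1 b1]] [m2 [M2 b2]]; split; first exact: measurable_funD.
exists (M1 + M2) => u uT; rewrite (le_trans (ler_normD _ _))//.
by rewrite lerD ?b1 ?b2.
Qed.

Lemma reg_mul T h1 h2 : regular_on T h1 -> regular_on T h2 ->
  regular_on T (fun u => h1 u * h2 u).
Proof.
move=> [m1 [M1 b1]] [m2 [M2 b2]]; split; first exact: measurable_funM.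
exists (M1 * M2) => u uT; rewrite normrM ler_pM ?b1 ?b2//.
Qed.

Lemma reg_opp T h : regular_on T h -> regular_on T (fun u => - h u).
Proof.
move=> [m [M b]]; split; first exact: measurable_funN.
by exists M => u uT; rewrite normrN b.
Qed.

Lemma reg_min T h1 h2 : regular_on T h1 -> regular_on T h2 ->
  regular_on T (fun u => Num.min (h1 u) (h2 u)).
Proof.
move=> [m1 [M1 b1]] [m2 [M2 b2]]; split; first exact: measurable_minr.
exists (M1 + M2) => u uT.
have n1 := normr_ge0 (h1 u); have n2 := normr_ge0 (h2 u).
have := b1 u uT; have := b2 u uT.
case: (leP (h1 u) (h2 u)) => _ c2 c1; lra.
Qed.

Lemma reg_sum T (I : eqType) (r : seq I) (P : pred I) (h : I -> R -> R) :
  (forall i, regular_on T (h i)) ->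
  regular_on T (fun u => \sum_(i <- r | P i) h i u).
Proof.
move=> rh; elim: r => [|a r IH].
  by apply: (reg_ext _ (reg_cst T 0)) => u; rewrite big_nil.
case: (boolP (P a)) => Pa.
  by apply: (reg_ext _ (reg_add (rh a) IH)) => u; rewrite big_cons Pa.
by apply: (reg_ext _ IH) => u; rewrite big_cons (negbTE Pa).
Qed.

Lemma Jint_sum T t (I : eqType) (r : seq I) (c : I -> R) (h : I -> R -> R) :
  (forall i, regular_on T (h i)) -> t \in `[0, T] ->
  Jint (fun u => \sum_(i <- r) c i * h i u) t = \sum_(i <- r) c i * Jint (h i) t.
Proof.
move=> rh tT; elim: r => [|a r IH].
  rewrite big_nil.
  have -> : (fun u : R => \sum_(i <- [::]) c i * h i u) = fun=> 0.
    by apply/funext => u; rewrite big_nil.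
  rewrite /Jint Rintegral_cst //= mul0r //.
have -> : (fun u : R => \sum_(i <- a :: r) c i * h i u) =
          (fun u => c a * h a u + \sum_(i <- r) c i * h i u).
  by apply/funext => u; rewrite big_cons.
rewrite (JintD (T:=T)) //.
- by rewrite big_cons IH (JintZ _ (rh a)).
- exact: (reg_mul (reg_cst _ _) (rh a)).
- apply: (reg_sum _ _ (fun i => reg_mul (reg_cst T (c i)) (rh i))).
Qed.

Lemma reg_Jint T h : 0 <= T -> regular_on T h -> regular_on T (Jint h).
Proof.
move=> T0 rh; split.
  apply: subspace_continuous_measurable_fun => //.
  exact: Jint_cont.
have [_ [M b]] := rh.
exists (M * T) => u uT.
have := uT; rewrite in_itv /= => /andP[u0 uT'].
have M0 : 0 <= M by rewrite (le_trans _ (b 0 _)) ?in0T.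
have B : forall v, 0 < v -> v <= u -> - M <= h v <= M.
  move=> v v0 vu; rewrite -ler_norml; apply: b; apply: in0T; [exact: ltW|exact: le_trans vu uT'].
have h1 := Jint_diff_le (c:=M) rh (lexx 0) u0 uT'
  (fun v v0 vu => proj2 (andP (B v v0 vu))).
have h2 := Jint_diff_ge (c:=-M) rh (lexx 0) u0 uT'
  (fun v v0 vu => proj1 (andP (B v v0 vu))).
rewrite Jint0 !subr0 in h1 h2.
have MuT : M * u <= M * T by rewrite ler_wpM2l.
rewrite ler_norml; apply/andP; split; lra.
Qed.

Lemma meas_inv : measurable_fun [set: R] (fun x : R => x^-1).
Proof.
have -> : (fun x : R => x^-1) = (fun x => if x == 0 then 0 else x^-1).
  by apply/funext => x; case: eqP => // ->; rewrite invr0.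
apply: measurable_fun_if => //.
- apply: measurable_fun_eqr => //.
- have -> : [set: R] `&` (fun x : R => x == 0) @^-1` [set false] = ~` [set 0].
    apply/seteqP; split => x /=; first by move=> [_ /eqP].
    by move=> /eqP /negbTE ->.
  apply: open_continuous_measurable_fun.
    apply/closed_openC/accessible_closed_set1/hausdorff_accessible; exact: Rhausdorff.
  move=> x; rewrite inE /= => /eqP x0; exact: inv_continuous.
Qed.

Lemma le_supnorm T h t : regular_on T h -> t \in `[0, T] -> `|h t| <= supnormT T h.
Proof.
move=> [_ [M b]] tT; apply: ub_le_sup; last by exists t.
by exists M => _ [s sT <-]; apply: b.
Qed.

End Anal.


Lemma div01 {R : realType} (x y : R) : 0 <= x -> x <= y ->
  [/\ 0 <= x / y, x / y <= 1 & x / y * y = x].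
Proof.
move=> x0 xy; have [y0|y0] := eqVneq y 0.
  rewrite y0 in xy *.
  have -> : x = 0 by apply/eqP; rewrite eq_le x0 xy.
  by rewrite !mul0r.
have yp : 0 < y by rewrite lt_neqAle eq_sym y0 (le_trans x0 xy).
split; [exact: divr_ge0 (ltW yp) | by rewrite ler_pdivrMr // mul1r | by rewrite divfK].
Qed.

Lemma exists_minpos {R : realType} n (f : 'I_n -> R) : (forall j, 0 < f j) ->
  exists a, 0 < a /\ forall j, a <= f j.
Proof.
move=> fp.
suff H : forall s : seq 'I_n, 0 < \big[Num.min/1]_(j <- s) f j /\
   forall j, j \in s -> \big[Num.min/1]_(j <- s) f j <= f j.
  have [H1 H2] := H (index_enum 'I_n).
  by exists (\big[Num.min/1]_(j <- index_enum 'I_n) f j); split => // j; apply: H2; rewrite mem_index_enum.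
elim => [|x s [IH1 IH2]]; first by rewrite big_nil.
rewrite big_cons; split; first by rewrite lt_min fp IH1.
move=> j; rewrite inE => /orP[/eqP->|js]; first by rewrite ge_min lexx.
by rewrite ge_min IH2 ?orbT.
Qed.

Lemma reg_id {R : realType} (T : R) : regular_on T id.
Proof.
split => //; exists `|T| => t; rewrite in_itv /= => /andP[t0 tT].
by rewrite ger0_norm // (le_trans tT (ler_norm T)).
Qed.


Section Main.
Context {R : realType} (nI nJ : nat) (E : {set 'I_nI * 'I_nJ})
  (mu : 'I_nI -> 'I_nJ -> R) (theta : 'I_nI -> R).
Hypotheses (mu_pos : forall i j, (i, j) \in E -> 0 < mu i j)
  (mu_out : forall i j, (i, j) \notin E -> mu i j = 0)
  (th0 : forall i, 0 <= theta i).
Context (i0 : 'I_nI) (j0 : 'I_nJ) (hi0 : forall j, (i0, j) \in E)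
  (hj0 : forall i, (i, j0) \in E) (a : R) (a0 : 0 < a) (ha : forall j, a <= mu i0 j).

Lemma mu_ge0 i j : 0 <= mu i j.
Proof. by case: (boolP ((i, j) \in E)) => h; [exact: ltW (mu_pos h)|rewrite mu_out]. Qed.

Definition b := mu i0 j0.
Definition tau := a^-1.
Definition Kc := (\sum_i \sum_j mu i j + \sum_i theta i) * (1 + b * tau).
Definition m5 := b + Kc.

Lemma b0 : 0 <= b. Proof. exact: mu_ge0. Qed.
Lemma tau0 : 0 < tau. Proof. by rewrite invr_gt0. Qed.
Lemma atau : a * tau = 1. Proof. by rewrite mulfV // gt_eqF. Qed.

Context (T : R) (T0 : 0 < T)
  (psi : 'I_nI -> 'I_nJ -> R -> R) (y : 'I_nI -> R -> R)
  (z : 'I_nJ -> R -> R) (w : 'I_nI -> R -> R)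
  (rpsi : forall i j, regular_on T (psi i j)) (ry : forall i, regular_on T (y i))
  (rz : forall j, regular_on T (z j)) (rw : forall i, regular_on T (w i))
  (sys : system_S E mu theta T psi y z w)
  (f : 'I_nI -> R -> R) (rf : forall i, regular_on T (f i))
  (f0 : forall i t, t \in `[0, T] -> 0 <= f i t).

Definition S := \sum_i supnormT T (f i).
Definition r t := b * S * Num.min t tau.
Definition ri i t := if i == i0 then r t else 0.
Definition F i t := f i t + ri i t.
Definition Fs t := \sum_i F i t.
Definition Z t := \sum_j z j t.
Definition Rr t := Num.min (Fs t) (Z t).
Definition lam t := Rr t / Fs t.
Definition lam' t := Rr t / Z t.
Definition So t := \sum_(k | k != i0) f k t.
Definition dpsi i j t :=
  if i == i0 then
    (if j == j0 then lam' t * z j0 t - lam t * So t else lam' t * z j t)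
  else (if j == j0 then lam t * F i t else 0).
Definition dy i t := (1 - lam t) * F i t.
Definition g i t := \sum_j mu i j * dpsi i j t + theta i * dy i t.
Definition eta i t := ri i t + Jint (g i) t.

Lemma f_le_sup i t : t \in `[0, T] -> f i t <= supnormT T (f i).
Proof. by move=> tT; rewrite (le_trans (ler_norm _)) // le_supnorm. Qed.

Lemma S0 : 0 <= S.
Proof.
apply: sumr_ge0 => i _; rewrite (le_trans _ (f_le_sup i (in0T (lexx 0) (ltW T0)))) //.
exact: f0 (in0T (lexx 0) (ltW T0)).
Qed.

Lemma sum_f_le t : t \in `[0, T] -> \sum_i f i t <= S.
Proof. by move=> tT; apply: ler_sum => i _; exact: f_le_sup. Qed.

Lemma So0 t : t \in `[0, T] -> 0 <= So t.
Proof. by move=> tT; apply: sumr_ge0 => i _; exact: f0. Qed.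

Lemma sum_f_split t : \sum_i f i t = f i0 t + So t.
Proof. by rewrite (bigD1 i0). Qed.

Lemma So_le t : t \in `[0, T] -> So t <= S.
Proof.
move=> tT; rewrite (le_trans _ (sum_f_le tT)) // sum_f_split lerDr; exact: f0.
Qed.

Lemma r0 t : 0 <= t -> 0 <= r t.
Proof.
move=> t0; rewrite /r mulr_ge0 ?mulr_ge0 ?b0 ?S0 //.
by rewrite le_min t0 (ltW tau0).
Qed.

Lemma r_le t : r t <= b * S * t.
Proof. by rewrite /r ler_wpM2l ?mulr_ge0 ?b0 ?S0 // ge_min lexx. Qed.

Lemma r_le_tau t : r t <= b * S * tau.
Proof. by rewrite /r ler_wpM2l ?mulr_ge0 ?b0 ?S0 // ge_min lexx orbT. Qed.

Lemma r_tau t : tau <= t -> r t = b * S * tau.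
Proof. by move=> h; rewrite /r (min_r h). Qed.

Lemma r_lin t : t <= tau -> r t = b * S * t.
Proof. by move=> h; rewrite /r (min_l h). Qed.

Lemma ri0 i t : 0 <= t -> 0 <= ri i t.
Proof. by rewrite /ri; case: ifP => // _; exact: r0. Qed.

Lemma F0 i t : t \in `[0, T] -> 0 <= F i t.
Proof.
move=> tT; have := tT; rewrite in_itv /= => /andP[t0 _].
by rewrite /F addr_ge0 ?ri0 // f0.
Qed.

Lemma Fs_split t : Fs t = F i0 t + So t.
Proof.
rewrite /Fs (bigD1 i0) //=; congr (_ + _); apply: eq_bigr => i /negbTE ne.
by rewrite /F /ri ne addr0.
Qed.

Lemma Fs_eq t : Fs t = \sum_i f i t + r t.
Proof. by rewrite Fs_split sum_f_split /F /ri eqxx; ring. Qed.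

Lemma Fs0 t : t \in `[0, T] -> 0 <= Fs t.
Proof. by move=> tT; apply: sumr_ge0 => i _; exact: F0. Qed.

Lemma Fs_le t : t \in `[0, T] -> Fs t <= S * (1 + b * tau).
Proof.
move=> tT; rewrite Fs_eq; have := sum_f_le tT; have := r_le_tau t.
have := S0; nra.
Qed.

Lemma z0 j t : t \in `[0, T] -> 0 <= z j t.
Proof. by move=> tT; have [_ _ _ [_ h] _] := sys tT. Qed.

Lemma y0 i t : t \in `[0, T] -> 0 <= y i t.
Proof. by move=> tT; have [_ _ _ [h _] _] := sys tT. Qed.

Lemma Z0 t : t \in `[0, T] -> 0 <= Z t.
Proof. by move=> tT; apply: sumr_ge0 => j _; exact: z0. Qed.

Lemma z_le_Z j t : t \in `[0, T] -> z j t <= Z t.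
Proof.
move=> tT; rewrite /Z (bigD1 j) //= lerDl; apply: sumr_ge0 => k _; exact: z0.
Qed.

Lemma Rr0 t : t \in `[0, T] -> 0 <= Rr t.
Proof. by move=> tT; rewrite le_min Fs0 ?Z0. Qed.

Lemma Rr_Fs t : Rr t <= Fs t. Proof. by rewrite ge_min lexx. Qed.
Lemma Rr_Z t : Rr t <= Z t. Proof. by rewrite ge_min lexx orbT. Qed.

Lemma lamP t : t \in `[0, T] -> [/\ 0 <= lam t, lam t <= 1 & lam t * Fs t = Rr t].
Proof. by move=> tT; apply: div01; [exact: Rr0|exact: Rr_Fs]. Qed.

Lemma lam'P t : t \in `[0, T] -> [/\ 0 <= lam' t, lam' t <= 1 & lam' t * Z t = Rr t].
Proof. by move=> tT; apply: div01; [exact: Rr0|exact: Rr_Z]. Qed.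

Lemma sum_lz t : \sum_j lam' t * z j t = lam' t * Z t.
Proof. by rewrite /Z mulr_sumr. Qed.

Lemma row_sum i t : t \in `[0, T] -> \sum_j dpsi i j t = lam t * F i t.
Proof.
move=> tT; have [_ _ lF] := lamP tT; have [_ _ lZ] := lam'P tT.
rewrite (bigD1 j0) //= /dpsi eqxx; case: ifP => [/eqP ->|ne].
  have -> : \sum_(j | j != j0) (if j == j0 then lam' t * z j0 t - lam t * So t
                                else lam' t * z j t) = \sum_(j | j != j0) lam' t * z j t.
    by apply: eq_bigr => j /negbTE ->.
  have := sum_lz t; rewrite (bigD1 j0) //= => e.
  have : lam' t * z j0 t + \sum_(j | j != j0) lam' t * z j t = lam t * Fs t.
    by rewrite e lZ lF.
  rewrite Fs_split; lra.
rewrite big1 ?addr0 // => j /negbTE ->; by [].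
Qed.

Lemma col_sum j t : t \in `[0, T] -> \sum_i dpsi i j t = lam' t * z j t.
Proof.
move=> tT; rewrite (bigD1 i0) //=.
rewrite (eq_bigr (fun i => if j == j0 then lam t * F i t else 0)); last first.
  by move=> i /negbTE ne; rewrite /dpsi ne.
rewrite /dpsi eqxx; case: eqP => [->|ne].
  have -> : \sum_(i | i != i0) lam t * F i t = lam t * So t.
    rewrite /So mulr_sumr; apply: eq_bigr => i /negbTE ne.
    by rewrite /F /ri ne addr0.
  by rewrite subrK.
by rewrite big1 ?addr0.
Qed.

Lemma dpsi_out i j t : (i, j) \notin E -> dpsi i j t = 0.
Proof.
move=> nE; rewrite /dpsi; case: eqP => [ei|_].
  by move: nE; rewrite ei hi0.
by case: eqP => // ej; move: nE; rewrite ej hj0.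
Qed.

Lemma dpsi_le i j t : t \in `[0, T] -> dpsi i j t <= Fs t.
Proof.
move=> tT; have [l0 l1 lF] := lamP tT; have [l0' l1' lZ] := lam'P tT.
have zj := z_le_Z j tT; have zj0 := z_le_Z j0 tT; have Z0t := Z0 tT.
have hz : forall k, lam' t * z k t <= Fs t.
  move=> k; rewrite (le_trans _ (Rr_Fs t)) // -lZ ler_wpM2l // z_le_Z //.
have FF : F i t <= Fs t.
  by rewrite /Fs (bigD1 i) //= lerDl; apply: sumr_ge0 => k _; exact: F0.
have Fi0 := F0 i tT.
rewrite /dpsi; case: ifP => _; case: ifP => _.
- have := hz j0; have : 0 <= lam t * So t by rewrite mulr_ge0 // So0.
  lra.
- exact: hz.
- rewrite (le_trans _ FF) //; nra.
- exact: Fs0.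
Qed.

Lemma F_le_Fs i t : t \in `[0, T] -> F i t <= Fs t.
Proof. by move=> tT; rewrite /Fs (bigD1 i) //= lerDl; apply: sumr_ge0 => k _; exact: F0. Qed.

Lemma dy0 i t : t \in `[0, T] -> 0 <= dy i t.
Proof. by move=> tT; have [_ l1 _] := lamP tT; rewrite /dy mulr_ge0 ?subr_ge0 ?F0. Qed.

Lemma dy_le i t : t \in `[0, T] -> dy i t <= Fs t.
Proof.
move=> tT; have [l0 l1 _] := lamP tT; have := F_le_Fs i tT; have := F0 i tT.
rewrite /dy; nra.
Qed.

Lemma g_le i t : t \in `[0, T] -> g i t <= (\sum_j mu i j + theta i) * Fs t.
Proof.
move=> tT; rewrite /g mulrDl mulr_suml; apply: lerD.
  by apply: ler_sum => j _; rewrite ler_wpM2l ?mu_ge0 ?dpsi_le.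
by rewrite ler_wpM2l ?dy_le.
Qed.

Lemma g_ge0 i t : i != i0 -> t \in `[0, T] -> 0 <= g i t.
Proof.
move=> /negbTE ne tT; have [l0 _ _] := lamP tT.
rewrite /g addr_ge0 //; last by rewrite mulr_ge0 // dy0.
apply: sumr_ge0 => j _.
rewrite /dpsi ne; case: ifP => _; last by rewrite mulr0.
by rewrite mulr_ge0 ?mu_ge0 // mulr_ge0 // F0.
Qed.

Lemma g_i0 t : \sum_j mu i0 j * dpsi i0 j t =
  \sum_j mu i0 j * (lam' t * z j t) - b * (lam t * So t).
Proof.
rewrite (bigD1 j0) // [in RHS](bigD1 j0) //=.
rewrite [X in _ + X = _](eq_bigr (fun j => mu i0 j * (lam' t * z j t))); last first.
  by move=> j /negbTE ne; rewrite /dpsi eqxx ne.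
rewrite /dpsi !eqxx /b; ring.
Qed.

Lemma g_L1 t : t \in `[0, T] -> - (b * S) <= g i0 t.
Proof.
move=> tT; have [l0 l1 _] := lamP tT; have [l0' _ _] := lam'P tT.
rewrite /g g_i0.
have h1 : 0 <= \sum_j mu i0 j * (lam' t * z j t).
  by apply: sumr_ge0 => j _; rewrite mulr_ge0 ?mu_ge0 // mulr_ge0 // z0.
have h2 : 0 <= theta i0 * dy i0 t by rewrite mulr_ge0 ?dy0.
have h3 : lam t * So t <= S.
  by rewrite (le_trans _ (So_le tT)) // ler_piMl ?So0.
have h4 : b * (lam t * So t) <= b * S by rewrite ler_wpM2l ?b0.
lra.
Qed.

Lemma g_L2 t : t \in `[0, T] -> tau <= t -> 0 <= g i0 t.
Proof.
move=> tT tt; have [l0 l1 lF] := lamP tT; have [l0' _ lZ] := lam'P tT.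
rewrite /g g_i0.
have h1 : a * (lam t * Fs t) <= \sum_j mu i0 j * (lam' t * z j t).
  rewrite lF -lZ /Z mulr_sumr mulr_sumr; apply: ler_sum => j _.
  by rewrite ler_wpM2r ?ha // mulr_ge0 // z0.
have h2 : 0 <= theta i0 * dy i0 t by rewrite mulr_ge0 ?dy0.
have h3 : b * S <= a * Fs t.
  have : r t <= Fs t.
    rewrite Fs_eq lerDr; apply: sumr_ge0 => i _; exact: f0.
  rewrite r_tau // => h; rewrite (le_trans _ (ler_wpM2l (ltW a0) h)) //.
  have e : a * (b * S * tau) = b * S * (a * tau) by ring.
  by rewrite e atau mulr1.
have h4 : b * So t <= b * S by rewrite ler_wpM2l ?b0 ?So_le.
have h5 : 0 <= lam t * (a * Fs t - b * So t) by rewrite mulr_ge0 // subr_ge0 (le_trans h4).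
have e : a * (lam t * Fs t) - b * (lam t * So t) = lam t * (a * Fs t - b * So t) by ring.
lra.
Qed.

Lemma reg_r : regular_on T r.
Proof.
apply: (reg_ext _ (reg_mul (reg_cst T (b * S)) (reg_min (reg_id T) (reg_cst T tau)))).
by [].
Qed.

Lemma reg_ri i : regular_on T (ri i).
Proof.
rewrite /ri; case: (i == i0); first exact: reg_r.
exact: reg_cst.
Qed.

Lemma reg_F i : regular_on T (F i).
Proof. exact: (reg_add (rf i) (reg_ri i)). Qed.

Lemma reg_Fs : regular_on T Fs.
Proof. exact: (reg_sum _ _ reg_F). Qed.

Lemma reg_Z : regular_on T Z.
Proof. exact: (reg_sum _ _ rz). Qed.

Lemma reg_So : regular_on T So.
Proof. exact: (reg_sum _ _ rf). Qed.

Lemma reg_Rr : regular_on T Rr.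
Proof. exact: (reg_min reg_Fs reg_Z). Qed.

Lemma reg_div h1 h2 : regular_on T h1 -> regular_on T h2 ->
  (forall t, t \in `[0, T] -> `|h1 t / h2 t| <= 1) ->
  regular_on T (fun t => h1 t / h2 t).
Proof.
move=> [m1 _] [m2 _] bd; split; last by exists 1.
apply: measurable_funM => //; exact: measurableT_comp meas_inv m2.
Qed.

Lemma reg_lam : regular_on T lam.
Proof.
apply: (reg_div reg_Rr reg_Fs) => t tT; have [l0 l1 _] := lamP tT.
by rewrite ger0_norm.
Qed.

Lemma reg_lam' : regular_on T lam'.
Proof.
apply: (reg_div reg_Rr reg_Z) => t tT; have [l0 l1 _] := lam'P tT.
by rewrite ger0_norm.
Qed.

Lemma reg_dpsi i j : regular_on T (dpsi i j).
Proof.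
rewrite /dpsi; case: (i == i0); case: (j == j0).
- exact: (reg_add (reg_mul reg_lam' (rz j0)) (reg_opp (reg_mul reg_lam reg_So))).
- exact: (reg_mul reg_lam' (rz j)).
- exact: (reg_mul reg_lam (reg_F i)).
- exact: reg_cst.
Qed.

Lemma reg_dy i : regular_on T (dy i).
Proof. exact: (reg_mul (reg_add (reg_cst T 1) (reg_opp reg_lam)) (reg_F i)). Qed.

Lemma reg_g i : regular_on T (g i).
Proof.
apply: (reg_add _ (reg_mul (reg_cst T (theta i)) (reg_dy i))).
exact: (reg_sum _ _ (fun j => reg_mul (reg_cst T (mu i j)) (reg_dpsi i j))).
Qed.

Lemma reg_eta i : regular_on T (eta i).
Proof. exact: (reg_add (reg_ri i) (reg_Jint (ltW T0) (reg_g i))). Qed.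

Lemma r_cont : continuous r.
Proof.
move=> x; rewrite /r.
apply: (@continuousM _ _ (fun=> b * S) (fun t => Num.min t tau)).
  exact: cst_continuous.
apply: (@continuous_min _ _ id (fun=> tau)).
  by [].
exact: cst_continuous.
Qed.

Lemma eta_cont i : {within `[0, T], continuous (eta i)}.
Proof.
have cJ := Jint_cont (reg_g i) (ltW T0).
move=> x; rewrite /eta.
apply: (@continuousD _ _ _ (from_subspace `[0, T] (ri i)) (from_subspace `[0, T] (Jint (g i)))); last exact: cJ.
apply: (continuous_subspaceT (A := `[0, T])) => //.
rewrite /ri; case: (i == i0); first exact: r_cont.
exact: cst_continuous.
Qed.

Lemma inT u : u \in `[0, T] -> 0 <= u /\ u <= T.
Proof. by rewrite in_itv /= => /andP. Qed.

Lemma eta_mono i s t : s \in `[0, T] -> t \in `[0, T] -> s <= t -> eta i s <= eta i t.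
Proof.
move=> sT tT st; have [s0 sT'] := inT sT; have [t0 tT'] := inT tT.
rewrite /eta /ri; case: eqP => [ei|/eqP ne]; last first.
  have := Jint_diff_ge (c:=0) (reg_g i) s0 st tT'.
  have H : forall u, s < u -> u <= t -> 0 <= g i u.
    move=> u su ut; apply: g_ge0 => //; apply: in0T.
      exact: le_trans s0 (ltW su).
    exact: le_trans ut tT'.
  move=> /(_ H); rewrite mul0r; lra.
subst i.
have L1 : forall u v, 0 <= u -> u <= v -> v <= T -> (- (b * S)) * (v - u) <= Jint (g i0) v - Jint (g i0) u.
  move=> u v u0 uv vT; apply: (Jint_diff_ge (reg_g i0)) => // x ux xv.
  apply: g_L1; apply: in0T; [exact: le_trans u0 (ltW ux)| exact: le_trans xv vT].
have L2 : forall u v, tau <= u -> u <= v -> v <= T -> 0 * (v - u) <= Jint (g i0) v - Jint (g i0) u.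
  move=> u v tu uv vT; have u0 : 0 <= u := le_trans (ltW tau0) tu.
  apply: (Jint_diff_ge (reg_g i0)) => // x ux xv.
  apply: g_L2; [apply: in0T; [exact: le_trans u0 (ltW ux)| exact: le_trans xv vT]|].
  exact: le_trans tu (ltW ux).
have bS0 : 0 <= b * S by rewrite mulr_ge0 ?b0 ?S0.
case: (leP t tau) => ttau.
  rewrite !r_lin //; last exact: le_trans st ttau.
  have := L1 s t s0 st tT'; nra.
case: (leP tau s) => taus.
  rewrite !r_tau //; last exact: ltW.
  have := L2 s t taus st tT'; lra.
rewrite r_lin ?r_tau; [|exact: ltW|exact: ltW].
have h1 := L1 s tau s0 (ltW taus) (le_trans (ltW ttau) tT').
have h2 := L2 tau t (lexx tau) (ltW ttau) tT'.
nra.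
Qed.

Lemma eta0 i : eta i 0 = 0.
Proof.
rewrite /eta Jint0 addr0 /ri; case: ifP => // _.
by rewrite r_lin ?mulr0 // ltW // tau0.
Qed.

Lemma eta_ge0 i t : t \in `[0, T] -> 0 <= eta i t.
Proof.
move=> tT; have [t0 _] := inT tT; rewrite -(eta0 i); apply: eta_mono => //.
exact: in0T (lexx 0) (ltW T0).
Qed.

Lemma coef_le i : \sum_j mu i j + theta i <= \sum_i \sum_j mu i j + \sum_i theta i.
Proof.
apply: lerD.
  rewrite (bigD1 i) //= lerDl; apply: sumr_ge0 => k _; apply: sumr_ge0 => j _.
  exact: mu_ge0.
by rewrite (bigD1 i) //= lerDl; apply: sumr_ge0 => k _.
Qed.

Lemma Kc0 : 0 <= Kc.
Proof.
rewrite /Kc mulr_ge0 // ?addr_ge0 //.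
- by apply: sumr_ge0 => k _; apply: sumr_ge0 => j _; exact: mu_ge0.
- by apply: sumr_ge0 => k _.
- by rewrite mulr_ge0 ?b0 // ltW // tau0.
Qed.

Lemma g_leK i t : t \in `[0, T] -> g i t <= Kc * S.
Proof.
move=> tT; rewrite (le_trans (g_le i tT)) //.
have c0 : 0 <= \sum_j mu i j + theta i.
  by rewrite addr_ge0 //; apply: sumr_ge0 => j _; exact: mu_ge0.
rewrite (le_trans (ler_wpM2l c0 (Fs_le tT))) // /Kc.
have X0 : 0 <= S * (1 + b * tau).
  by rewrite mulr_ge0 ?S0 // addr_ge0 // mulr_ge0 ?b0 // ltW // tau0.
have h := ler_wpM2r X0 (coef_le i).
rewrite (le_trans h) //.
set C := (\sum_i \sum_j mu i j + \sum_i theta i).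
have -> : C * (1 + b * tau) * S = C * (S * (1 + b * tau)) by ring.
by [].
Qed.

Lemma eta_le i t : t \in `[0, T] -> eta i t <= m5 * T * S.
Proof.
move=> tT; have [t0 tT'] := inT tT.
have h := Jint_diff_le (c := Kc * S) (reg_g i) (lexx 0) t0 tT'
  (fun u u0 ut => g_leK i (in0T (ltW u0) (le_trans ut tT'))).
rewrite Jint0 !subr0 in h.
have hr : ri i t <= b * S * t.
  rewrite /ri; case: ifP => _; first exact: r_le.
  by rewrite mulr_ge0 ?mulr_ge0 ?b0 ?S0.
have m0 : 0 <= (b + Kc) * S by rewrite mulr_ge0 ?addr_ge0 ?b0 ?Kc0 ?S0.
have := ler_wpM2l m0 tT'.
rewrite /eta /m5 => h2.
have e1 : (b + Kc) * T * S = (b + Kc) * S * T by ring.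
have e2 : b * S * t + Kc * S * t = (b + Kc) * S * t by ring.
rewrite e1; lra.
Qed.

Lemma Jg_eq i t : t \in `[0, T] ->
  Jint (g i) t = \sum_j mu i j * Jint (dpsi i j) t + theta i * Jint (dy i) t.
Proof.
move=> tT; rewrite /g.
rewrite (JintD (T:=T)) //; last first.
- exact: (reg_mul (reg_cst T (theta i)) (reg_dy i)).
- exact: (reg_sum _ _ (fun j => reg_mul (reg_cst T (mu i j)) (reg_dpsi i j))).
rewrite (JintZ _ (reg_dy i)) //; congr (_ + _).
exact: (Jint_sum _ _ (fun j => reg_dpsi i j)).
Qed.

Lemma sysh : system_S E mu theta T (fun i j t => psi i j t + dpsi i j t)
  (fun i t => y i t + dy i t) (fun j t => (1 - lam' t) * z j t)
  (fun i t => w i t + f i t + eta i t).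
Proof.
move=> t tT; have [off s1 s2 [ys zs] s4] := sys tT.
have [l0 l1 lF] := lamP tT; have [l0' l1' lZ] := lam'P tT.
split.
- by move=> i j nE; rewrite off // dpsi_out // add0r.
- move=> i.
  have e1 : forall j, Jint (fun u => psi i j u + dpsi i j u) t =
      Jint (psi i j) t + Jint (dpsi i j) t.
    by move=> j; apply: (JintD (rpsi i j) (reg_dpsi i j)).
  have e2 : Jint (fun u => y i u + dy i u) t = Jint (y i) t + Jint (dy i) t.
    exact: (JintD (ry i) (reg_dy i)).
  rewrite (eq_bigr (fun j => (psi i j t + mu i j * Jint (psi i j) t) + dpsi i j t +
      mu i j * Jint (dpsi i j) t)); last by move=> j _; rewrite e1; ring.
  have s1i := s1 i; rewrite big_split /= in s1i.
  rewrite !big_split /= s1i row_sum // e2 /eta Jg_eq // /dy /F.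
  ring.
- by move=> j; rewrite big_split /= s2 col_sum //; ring.
- split => [i|j]; first by rewrite addr_ge0 // dy0.
  by rewrite mulr_ge0 ?subr_ge0.
have ey : \sum_i (y i t + dy i t) = \sum_i y i t + (Fs t - Rr t).
  rewrite big_split /= /dy -mulr_sumr; congr (_ + _).
  by rewrite mulrBl mul1r lF.
have ez : \sum_j (1 - lam' t) * z j t = Z t - Rr t.
  by rewrite -mulr_sumr mulrBl mul1r -/(Z t) lZ.
rewrite ey ez.
have Y0 : 0 <= \sum_i y i t by apply: sumr_ge0 => i _.
have Z0t := Z0 tT; have F0t := Fs0 tT.
move: s4; rewrite -/(Z t) /Rr.
case: (leP (\sum_i y i t) (Z t)) => h1 s4.
  case: (leP (Fs t) (Z t)) => h2.
    rewrite subrr addr0; case: (leP (\sum_i y i t) (Z t - Fs t)) => h3; lra.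
  rewrite subrr; case: (leP (\sum_i y i t + (Fs t - Z t)) 0) => h3; lra.
case: (leP (Fs t) (Z t)) => h2.
  rewrite subrr addr0; case: (leP (\sum_i y i t) (Z t - Fs t)) => h3; lra.
rewrite subrr; case: (leP (\sum_i y i t + (Fs t - Z t)) 0) => h3; lra.
Qed.

Lemma sum_yh t : t \in `[0, T] -> \sum_i (y i t + dy i t) = \sum_i y i t + (Fs t - Rr t).
Proof.
move=> tT; have [l0 l1 lF] := lamP tT.
rewrite big_split /= /dy -mulr_sumr; congr (_ + _).
by rewrite mulrBl mul1r lF.
Qed.

Lemma sum_zh t : t \in `[0, T] -> \sum_j (1 - lam' t) * z j t = Z t - Rr t.
Proof.
move=> tT; have [l0' l1' lZ] := lam'P tT.
by rewrite -mulr_sumr mulrBl mul1r -/(Z t) lZ.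
Qed.

Lemma construct : exists (psih : 'I_nI -> 'I_nJ -> R -> R) (yh : 'I_nI -> R -> R)
         (zh : 'I_nJ -> R -> R) (wh : 'I_nI -> R -> R) (eta' : 'I_nI -> R -> R),
    [/\ (forall i j, regular_on T (psih i j)),
        (forall i, regular_on T (yh i)),
        (forall j, regular_on T (zh j)),
        (forall i, regular_on T (wh i)) &
        system_S E mu theta T psih yh zh wh] /\
    [/\
        (forall t, t \in `[0, T] ->
           \sum_(i < nI) y i t <= \sum_(i < nI) yh i t /\
           \sum_(j < nJ) zh j t <= \sum_(j < nJ) z j t),
        (forall i t, t \in `[0, T] -> wh i t = w i t + f i t + eta' i t),
        (forall i, {within `[0, T], continuous (eta' i)}) &
        (forall i, [/\ (forall s t, s \in `[0, T] -> t \in `[0, T] -> s <= t -> eta' i s <= eta' i t),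
                    (forall t, t \in `[0, T] -> 0 <= eta' i t) &
                    (forall t, t \in `[0, T] ->
                       eta' i t <= m5 * T * \sum_(i' < nI) supnormT T (f i'))])].
Proof.
exists (fun i j t => psi i j t + dpsi i j t), (fun i t => y i t + dy i t),
  (fun j t => (1 - lam' t) * z j t), (fun i t => w i t + f i t + eta i t), eta.
split; split.
- by move=> i j; exact: (reg_add (rpsi i j) (reg_dpsi i j)).
- by move=> i; exact: (reg_add (ry i) (reg_dy i)).
- by move=> j; exact: (reg_mul (reg_add (reg_cst T 1) (reg_opp reg_lam')) (rz j)).
- by move=> i; exact: (reg_add (reg_add (rw i) (rf i)) (reg_eta i)).
- exact: sysh.
- move=> t tT; rewrite sum_yh // sum_zh //.
  have := Rr_Fs t; have := Rr0 tT; rewrite -/(Z t); lra.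
- by [].
- exact: eta_cont.
- move=> i; split.
  + by move=> s t; apply: eta_mono.
  + by move=> t; apply: eta_ge0.
  + by move=> t; apply: eta_le.
Qed.

End Main.

Unset Implicit Arguments.

Theorem lemma2 (R : realType) (nI nJ : nat) (E : {set 'I_nI * 'I_nJ})
  (mu : 'I_nI -> 'I_nJ -> R) (theta : 'I_nI -> R) :
  (forall i j, (i, j) \in E -> 0 < mu i j) ->
  (forall i j, (i, j) \notin E -> mu i j = 0) ->
  (forall i, 0 <= theta i) ->
  is_tree E -> diameter_eq E 3 ->
  exists m5 : R,
  forall (T : R), 0 < T ->
  forall (psi : 'I_nI -> 'I_nJ -> R -> R) (y : 'I_nI -> R -> R)
         (z : 'I_nJ -> R -> R) (w : 'I_nI -> R -> R),
    (forall i j, regular_on T (psi i j)) ->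
    (forall i, regular_on T (y i)) ->
    (forall j, regular_on T (z j)) ->
    (forall i, regular_on T (w i)) ->
    system_S E mu theta T psi y z w ->
  forall f : 'I_nI -> R -> R,
    (forall i, regular_on T (f i)) ->
    (forall i t, t \in `[0, T] -> 0 <= f i t) ->
  exists (psih : 'I_nI -> 'I_nJ -> R -> R) (yh : 'I_nI -> R -> R)
         (zh : 'I_nJ -> R -> R) (wh : 'I_nI -> R -> R) (eta : 'I_nI -> R -> R),
    [/\ (forall i j, regular_on T (psih i j)),
        (forall i, regular_on T (yh i)),
        (forall j, regular_on T (zh j)),
        (forall i, regular_on T (wh i)) &
        system_S E mu theta T psih yh zh wh] /\
    [/\
        (forall t, t \in `[0, T] ->
           \sum_(i < nI) y i t <= \sum_(i < nI) yh i t /\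
           \sum_(j < nJ) zh j t <= \sum_(j < nJ) z j t),
        (forall i t, t \in `[0, T] -> wh i t = w i t + f i t + eta i t),
        (forall i, {within `[0, T], continuous (eta i)}) &
        (forall i, [/\ (forall s t, s \in `[0, T] -> t \in `[0, T] -> s <= t -> eta i s <= eta i t),
                    (forall t, t \in `[0, T] -> 0 <= eta i t) &
                    (forall t, t \in `[0, T] ->
                       eta i t <= m5 * T * \sum_(i' < nI) supnormT T (f i'))])].
Proof.
move=> mupos muout th0 tree diam.
have [i1 [j1 _]] := sides diam.
have [j0 hj0] := starJ i1 j1 tree diam.
have [i0 hi0] := starI i1 j1 tree diam.
have [a [a0 ha]] := exists_minpos (fun j => mupos i0 j (hi0 j)).
eexists => T T0 psi y z w rpsi ry rz rw sys f rf f0.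
by apply: (construct mupos muout th0 hi0 hj0 a0 ha T0 rpsi ry rz rw sys rf f0).
Qed.
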